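(* Let $n$ be an odd composite integer. Then $|S(n)| = 2$ if and only if (1) $n$ is divisible by some prime $p \equiv 3 \pmod 4$, and (2) $\gcd(p', (n/p)') = 1$ for every prime $p$ dividing $n$.
   Context: For a positive integer $m$, $m'$ denotes the odd part of $m-1$ (so $m-1 = 2^k m'$ with $m'$ odd). The set of strong liars of $n$ (with $n - 1 = 2^k n'$, $n'$ odd) is $S(n) = \{ a \bmod n : a^{n'} \equiv 1 \pmod n \text{ or } a^{2^i n'} \equiv -1 \pmod n \text{ for some } 0 \le i < k\}$. *)

(* Defs.v *)
From mathcomp Require Import all_boot.
Set Implicit Arguments. Unset Strict Implicit. Unset Printing Implicit Defensive.

(* odd part of m - 1: m - 1 = 2^k * m' with m' odd (for m >= 2) *)
Definition two_exp (m : nat) : nat := logn 2 m.-1.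
Definition oddpart1 (m : nat) : nat := m.-1 %/ 2 ^ two_exp m.

Definition strong_liar (n a : nat) : bool :=
  (a ^ oddpart1 n %% n == 1 %% n) ||
  [exists i : 'I_(two_exp n), (a ^ (2 ^ i * oddpart1 n) + 1) %% n == 0].

Definition S (n : nat) : {set 'I_n} := [set a : 'I_n | strong_liar n a].

(* Main.v *)
Require Import Defs.
From mathcomp Require Import all_boot all_algebra all_solvable zify.
Import GRing.Theory.
Set Implicit Arguments. Unset Strict Implicit. Unset Printing Implicit Defensive.


Lemma PoszX x t : Posz (x ^ t)%N = (Posz x ^+ t)%R.
Proof. by rewrite -!natz natrX. Qed.

Lemma odd_sum_dvd x y t : odd t -> x + y %| x ^ t + y ^ t.
Proof.
move=> ot.
have : (Posz (x + y) %| Posz (x ^ t + y ^ t))%Z.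
  have -> : (Posz (x ^ t + y ^ t) = (Posz x) ^+ t - (- (Posz y)) ^+ t)%R.
    by rewrite exprNn -signr_odd ot /= mulN1r opprK PoszD !PoszX.
  rewrite subrXX opprK -PoszD; exact: dvdz_mulr (dvdzz _).
by rewrite dvdzE.
Qed.

Lemma sub_pow_dvd x y t : x - y %| x ^ t - y ^ t.
Proof. by rewrite subn_exp dvdn_mulr. Qed.

Lemma mod1_dvd m u : 0 < u -> (u = 1 %[mod m]) <-> (m %| u - 1).
Proof. by move=> u0; rewrite -eqn_mod_dvd //; split => /eqP. Qed.

Lemma pow1_gcd m x a b : 0 < a -> x ^ a = 1 %[mod m] -> x ^ b = 1 %[mod m] ->
  x ^ (gcdn a b) = 1 %[mod m].
Proof.
move=> a0 Ha Hb; case: (Bezoutl b a0) => c _ /dvdnP [t Ht].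
have H1 : x ^ (gcdn a b + c * b) = 1 %[mod m].
  by rewrite Ht mulnC expnM -modnXm Ha modnXm exp1n.
have Hc : x ^ (c * b) = 1 %[mod m] by rewrite mulnC expnM -modnXm Hb modnXm exp1n.
rewrite -H1 expnD -modnMmr Hc modnMmr muln1 //.
Qed.

Lemma pfermat p y : prime p -> ~~ (p %| y) -> y ^ p.-1 = 1 %[mod p].
Proof.
move=> pp ndv; rewrite -totient_prime //; apply: Euler_exp_totient.
by rewrite coprime_sym prime_coprime.
Qed.

Lemma fermat_iter p g j : prime p -> g ^ (p ^ j) = g %[mod p].
Proof.
move=> pp; elim: j => [|j IH]; first by rewrite expn0 expn1.
by rewrite expnSr expnM -modnXm IH modnXm fermat_little.
Qed.

Lemma lift1 p z j : prime p -> z = 1 %[mod p] -> z ^ (p ^ j) = 1 %[mod p ^ j.+1].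
Proof.
move=> pp Hz; have p1 := prime_gt1 pp.
elim: j => [|j IH]; first by rewrite expn0 !expn1.
set u := z ^ (p ^ j) in IH.
have u0 : 0 < u.
  case: (posnP u) IH => // -> ; rewrite mod0n modn_small // -{1}(expn0 p) ltn_exp2l //.
have upos : 0 < u ^ p by rewrite expn_gt0 u0.
rewrite expnSr expnM -/u; apply/(mod1_dvd _ upos).
move/(mod1_dvd _ u0): IH => IH.
rewrite -[X in _ - X](exp1n p) subn_exp expnS mulnC; apply: dvdn_mul => //.
have Hu : forall k, u ^ k = 1 %[mod p].
  move=> k; rewrite -modnXm.
  have -> : u %% p = 1 %% p.
    apply/eqP; rewrite eqn_mod_dvd //; apply: dvdn_trans IH.
    by rewrite expnS dvdn_mulr.
  by rewrite modnXm exp1n.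
rewrite /dvdn -modn_summ.
under eq_bigr => i _ do rewrite exp1n muln1 Hu.
by rewrite sum_nat_const card_ord (modn_small p1) muln1 modnn.
Qed.

Lemma roots_exist p d : prime p -> 0 < d -> d < p.-1 ->
  exists y, 0 < y < p /\ y ^ d %% p != 1.
Proof.
move=> pp d0 dlt.
case: (boolP [exists y : 'I_p, (0 < y) && (y ^ d %% p != 1)]).
  by case/existsP => y /andP [y0 yd]; exists y; rewrite y0 ltn_ord.
move/existsPn => H; exfalso.
pose rs := [seq (i%:R : 'F_p)%R | i <- iota 1 p.-1].
have Hval : forall i, ((i%:R : 'F_p)%R : nat) = i %% p by move=> i; rewrite val_Fp_nat.
have Hall : all (d.-unity_root)%R rs.
  apply/allP => z /mapP [i]; rewrite mem_iota => /andP [i0 ilt] ->.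
  have ip : i < p by move: ilt; rewrite add1n prednK // prime_gt0.
  have := H (Ordinal ip); rewrite /= i0 /= negbK => /eqP Hi.
  rewrite unity_rootE -natrX; apply/eqP/val_inj; rewrite /= val_Fp_nat // Hi (Fp_cast pp) modn_small // prime_gt1.
have Huniq : uniq rs.
rewrite map_inj_in_uniq ?iota_uniq // => i j; rewrite !mem_iota => /andP [_ hi] /andP [_ hj] /(congr1 val).
have ltp : forall k, k < 1 + p.-1 -> k < p by move=> k; rewrite add1n prednK // prime_gt0.
move=> E; have Ei : i %% p = j %% p by rewrite -!Hval; exact: E.
by move: Ei; rewrite !modn_small // ltp.
by have := max_unity_roots d0 Hall Huniq; rewrite size_map size_iota leqNgt dlt.
Qed.

Lemma op_mul m : oddpart1 m * 2 ^ two_exp m = m.-1.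
Proof. by rewrite /oddpart1 /two_exp divnK // pfactor_dvdnn. Qed.

Lemma op_odd m : 0 < m.-1 -> odd (oddpart1 m).
Proof.
move=> m0; apply/negP => /negP ev.
have : 2 ^ (two_exp m).+1 %| m.-1.
  by rewrite -op_mul expnS dvdn_mul // dvdn2.
by rewrite pfactor_dvdn // ltnn.
Qed.

Lemma op_dvd_odd q m : odd q -> (q %| m.-1) = (q %| oddpart1 m).
Proof.
by move=> oq; rewrite -op_mul Gauss_dvdl // coprimeXr // coprimen2.
Qed.

Lemma two_exp_ge1 n : odd n -> 1 < n -> 0 < two_exp n.
Proof.
move=> on n1; rewrite /two_exp -pfactor_dvdn ?expn1 //; last by case: n on n1 => [|[|]].
by rewrite dvdn2; case: n on n1 => //= n; rewrite negbK.
Qed.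

Lemma no_pm1 n y : 2 < n -> n %| y + 1 -> y = 1 %[mod n] -> False.
Proof.
move=> n2 /dvdnP [c Hc] Hy.
have : 2 %% n = 0.
  by rewrite -[2]/(1 + 1) -modnDml -Hy modnDml Hc modnMl.
by rewrite modn_small.
Qed.

Lemma sq1 m y : m %| y + 1 -> y ^ 2 = 1 %[mod m].
Proof.
case: (posnP y) => [-> | y0].
  by rewrite add0n dvdn1 => /eqP ->; rewrite !modn1.
move=> H; have yp : 0 < y ^ 2 by rewrite expn_gt0 y0.
apply/(mod1_dvd _ yp).
by rewrite -[X in _ - X](exp1n 2) subn_sqr dvdn_mull.
Qed.

Lemma prime_odd_of n p : odd n -> prime p -> p %| n -> odd p.
Proof.
move=> on pp pn; apply/negP => /negP ev.
have : 2 %| n by apply: dvdn_trans pn; rewrite dvdn2.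
by rewrite dvdn2 on.
Qed.

Lemma nm1_split p m : 0 < p -> 0 < m -> (p * m).-1 = p * m.-1 + p.-1.
Proof. move=> p0 m0; case: p p0 => // p _; case: m m0 => // m _. rewrite /=. lia. Qed.

Lemma coprime_tot n : odd n -> 1 < n ->
  (forall p, prime p -> p %| n -> coprime (oddpart1 p) (oddpart1 (n %/ p))) ->
  coprime (oddpart1 n) (totient n).
Proof.
move=> on n1 H.
have n0 : 0 < n by apply: ltnW.
have Nodd : odd (oddpart1 n) by apply: op_odd; case: n on n1 {n0 H} => [|[|]].
have N0 : 0 < oddpart1 n by apply: odd_gt0.
apply/negPn/negP => nc.
set g := gcdn (oddpart1 n) (totient n) in nc.
have g1 : 1 < g by rewrite ltn_neqAle eq_sym nc gcdn_gt0 N0.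
have qp := pdiv_prime g1.
set q := pdiv g in qp.
have qN : q %| oddpart1 n by apply: dvdn_trans (pdiv_dvd g) (dvdn_gcdl _ _).
have qT : q %| totient n by apply: dvdn_trans (pdiv_dvd g) (dvdn_gcdr _ _).
have oq : odd q.
  apply/negP => /negP ev; have : 2 %| oddpart1 n by apply: dvdn_trans qN; rewrite dvdn2.
  by rewrite dvdn2 Nodd.
have qn1 : q %| n.-1 by rewrite op_dvd_odd.
move: qT; rewrite totientE // (Euclid_dvd_prod _ _ _ qp) big_has => /hasP [p].
rewrite mem_primes => /and3P [pp _ pn]; rewrite (Euclid_dvdM _ _ qp) => /orP [qp1|].
  have m0 : 0 < n %/ p by rewrite divn_gt0 ?prime_gt0 // dvdn_leq.
  have qpcop : coprime q p.
    rewrite prime_coprime //; apply/negP => qdp.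
    have : q %| p - p.-1 by apply: dvdn_sub.
    by rewrite -subn1 subKn ?prime_gt0 // dvdn1 => /eqP q1; move: qp; rewrite q1.
  have qm : q %| (n %/ p).-1.
    move: qn1; rewrite -{1}(divnK pn) mulnC (nm1_split (prime_gt0 pp) m0).
    by rewrite dvdn_addl // Gauss_dvdr.
  have := H p pp pn; rewrite /coprime => /eqP g1'.
  have : q %| gcdn (oddpart1 p) (oddpart1 (n %/ p)).
    by rewrite dvdn_gcd -!op_dvd_odd // qp1.
  by rewrite g1' dvdn1 => /eqP q1; move: qp; rewrite q1.
rewrite (Euclid_dvdX _ _ qp) => /andP [qdp _].
have qn : q %| n by apply: dvdn_trans pn.
have : q %| n - n.-1 by apply: dvdn_sub.
by rewrite -subn1 subKn // dvdn1 => /eqP q1; move: qp; rewrite q1.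
Qed.

Lemma caseA n x : odd n -> 1 < n ->
  (forall p, prime p -> p %| n -> coprime (oddpart1 p) (oddpart1 (n %/ p))) ->
  x ^ oddpart1 n = 1 %[mod n] -> x = 1 %[mod n].
Proof.
move=> on n1 H Hx.
have Nodd : odd (oddpart1 n) by apply: op_odd; case: n on n1 {H Hx} => [|[|]].
have N0 : 0 < oddpart1 n by apply: odd_gt0.
have cx : coprime x n.
  by rewrite -(coprime_pexpl _ _ N0) -coprime_modl Hx coprime_modl coprime1n.
have := pow1_gcd N0 Hx (Euler_exp_totient cx).
by rewrite (eqP (coprime_tot on n1 H)) expn1.
Qed.

Lemma odd_pow_dvd1 r y t : odd t -> r %| y + 1 -> r %| y ^ t + 1.
Proof. by move=> ot H; apply: dvdn_trans H _; rewrite -{2}(exp1n t) odd_sum_dvd. Qed.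

Lemma caseB n r x i : odd n -> 1 < n ->
  (forall p, prime p -> p %| n -> coprime (oddpart1 p) (oddpart1 (n %/ p))) ->
  prime r -> r %| n -> r %% 4 = 3 ->
  x < n -> (x ^ (2 ^ i * oddpart1 n) + 1) %% n = 0 -> x = n.-1.
Proof.
move=> on n1 H rp rn r4 xn Hx.
have Nodd : odd (oddpart1 n) by apply: op_odd; case: n on n1 {H Hx xn rn} => [|[|]].
have N0 : 0 < oddpart1 n by apply: odd_gt0.
have i0 : i = 0.
  case: i Hx => // j Hx; exfalso.
  set y := x ^ (2 ^ j * oddpart1 n).
  have ry : r %| y ^ 2 + 1.
    apply: dvdn_trans rn _; apply/eqP; rewrite -[RHS]Hx; congr (_ %% _); congr (_ + _).
    by rewrite /y -expnM expnS; congr (x ^ _); lia.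
  have nry : ~~ (r %| y).
    apply/negP => ry'; have : r %| y ^ 2 by apply: dvdn_exp.
    move=> ry2; move: ry; rewrite dvdn_addr // dvdn1 => /eqP r1.
    by move: rp; rewrite r1.
  have := pfermat rp nry.
  have r3 : 2 < r by move: r4; case: r rp {rn nry ry} => [|[|[|]]].
  have ht : r.-1 = 2 * ((r %/ 4) * 2 + 1).
    by move: r4 (divn_eq r 4) => -> E; rewrite {1}E; lia.
  rewrite ht expnM => Hf.
  apply: (no_pm1 r3 _ Hf); apply: odd_pow_dvd1 => //.
  by rewrite oddD oddM /= andbF.
move: Hx; rewrite i0 expn0 mul1n => Hx.
have x0 : 0 < x.
  case: (posnP x) Hx => // ->; rewrite exp0n // add0n modn_small //.
have nx : n %| (n - x) ^ oddpart1 n + x ^ oddpart1 n.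
  by apply: dvdn_trans (odd_sum_dvd _ _ Nodd); rewrite subnK // ltnW.
have Hb : (n - x) ^ oddpart1 n = 1 %[mod n].
  have E : (n - x) ^ oddpart1 n %% n = ((n - x) ^ oddpart1 n + (x ^ oddpart1 n + 1)) %% n by rewrite -modnDmr Hx addn0.
  by rewrite E addnA -modnDml (eqP nx) add0n.
have := caseA on n1 H Hb; rewrite !modn_small //; first lia.
by rewrite ltn_subrL x0 (ltn_trans _ n1).
Qed.

Lemma liar1 n : strong_liar n 1.
Proof. by rewrite /strong_liar exp1n eqxx. Qed.

Lemma liarm1 n : odd n -> 1 < n -> strong_liar n n.-1.
Proof.
move=> on n1; have k0 := two_exp_ge1 on n1.
have Nodd : odd (oddpart1 n) by apply: op_odd; case: n on n1 {k0} => [|[|]].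
apply/orP; right; apply/existsP; exists (Ordinal k0); rewrite /= expn0 mul1n.
change (n %| n.-1 ^ oddpart1 n + 1); apply: odd_pow_dvd1 Nodd _.
by rewrite addn1 prednK // ltnW.
Qed.

Lemma card_S2 n : odd n -> 1 < n ->
  (exists p, [/\ prime p, p %| n & p %% 4 = 3]) ->
  (forall p, prime p -> p %| n -> coprime (oddpart1 p) (oddpart1 (n %/ p))) ->
  #|S n| = 2.
Proof.
move=> on n1 [r [rp rn r4]] H.
have n2 : 2 < n by case: n on n1 {rn H} => [|[|[|]]].
have n0 : 0 < n by apply: ltnW.
pose i1 : 'I_n := Ordinal n1.
have nm1 : n.-1 < n by rewrite prednK.
pose im : 'I_n := Ordinal nm1.
have -> : S n = [set i1; im].
  apply/setP => a; rewrite /S !inE; apply/idP/idP.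
    case/orP => [/eqP Ha | /existsP [i /eqP Hi]].
      have := caseA on n1 H Ha; rewrite !modn_small ?ltn_ord // => a1.
      by apply/orP; left; apply/eqP/val_inj.
    have := caseB on n1 H rp rn r4 (ltn_ord a) Hi => am.
    by apply/orP; right; apply/eqP/val_inj.
  by case/orP => /eqP ->; rewrite ?liar1 ?liarm1.
rewrite cards2; suff -> : i1 != im by [].
apply/negP => /eqP /(congr1 val) /= E.
by move: n2 E; case: n {i1 im nm1 H rn on n1 n0} => [|[|[|]]].
Qed.

Lemma p4mod p n : odd n -> prime p -> p %| n -> p %% 4 != 3 -> p %% 4 = 1.
Proof.
move=> on pp pn n3; have op := prime_odd_of on pp pn.
have : odd (p %% 4) by move: op; rewrite {1}(divn_eq p 4) oddD oddM /= andbF.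
move: n3 (ltn_pmod p (isT : 0 < 4)); case: (p %% 4) => [|[|[|[|]]]] //.
Qed.

Lemma sqrtm1_prime p : prime p -> p %% 4 = 1 -> exists g, p %| g ^ 2 + 1.
Proof.
move=> pp p4; set a := p %/ 4.
have Hp : p = a * 4 + 1 by rewrite {1}(divn_eq p 4) p4.
have a0 : 0 < a by case: (posnP a) Hp => // ->; move=> E; move: pp; rewrite E.
have [y [/andP [y0 yp] yd]] := roots_exist (d := a * 2) pp (ltac:(lia)) (ltac:(lia)).
have nyd : ~~ (p %| y) by rewrite gtnNdvd.
have := pfermat pp nyd.
have -> : p.-1 = a * 2 * 2 by lia.
rewrite expnM; set z := y ^ (a * 2) in yd *.
have z0 : 0 < z by rewrite expn_gt0 y0.
have z2 : 0 < z ^ 2 by rewrite expn_gt0 z0.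
move/(mod1_dvd _ z2).
rewrite -[X in _ - X](exp1n 2) subn_sqr (Euclid_dvdM _ _ pp) => /orP [H|H].
  by move/(mod1_dvd _ z0): H => /eqP; rewrite (modn_small (prime_gt1 pp)) (negbTE yd).
by exists (y ^ a); rewrite -expnM.
Qed.

Lemma sub_pm1 x : 0 < x -> (x + 1) - (x - 1) = 2.
Proof. lia. Qed.

Lemma sqrtm1_pe p e : prime p -> p %% 4 = 1 -> exists c, p ^ e %| c ^ 2 + 1.
Proof.
move=> pp p4; case: e => [|j]; first by exists 0.
have [g pg] := sqrtm1_prime pp p4.
have g4 : g ^ 4 = 1 %[mod p] by rewrite (_ : 4 = 2 * 2) // expnM; apply: sq1.
have := lift1 j pp g4; rewrite expnAC; set w := g ^ (p ^ j).
have pw : p %| w ^ 2 + 1.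
  by rewrite /dvdn -modnDml -modnXm fermat_iter // modnXm modnDml.
have w0 : 0 < w.
  case: (posnP w) pw => // ->; rewrite exp0n // add0n dvdn1 => /eqP p1.
  by move: pp; rewrite p1.
clearbody w.
have w2 : 0 < (w ^ 2) ^ 2 by rewrite !expn_gt0 w0.
rewrite (_ : 4 = 2 * 2) // expnM => /(mod1_dvd _ w2).
rewrite -[X in _ - X](exp1n 2) subn_sqr Gauss_dvdr //.
  by move=> H; exists w.
apply: coprimeXl; rewrite prime_coprime //; apply/negP => H.
have : p %| (w ^ 2 + 1) - (w ^ 2 - 1) by apply: dvdn_sub.
rewrite sub_pm1; last by rewrite expn_gt0 w0.
move/(dvdn_leq (isT : 0 < 2)) => p2.
have p1 := prime_gt1 pp.
have E : p = 2 by apply/eqP; rewrite eqn_leq p2 p1.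
by move: p4; rewrite E.
Qed.

Lemma dvd_congr d x y k : x = y %[mod d] -> (d %| x ^ k + 1) = (d %| y ^ k + 1).
Proof. by move=> H; rewrite /dvdn -modnDml -modnXm H modnXm modnDml. Qed.

Lemma all1mod4 n : 0 < n -> (forall p, prime p -> p %| n -> p %% 4 = 1) ->
  n %% 4 = 1 /\ exists x, n %| x ^ 2 + 1.
Proof.
elim/ltn_ind: n => n IH n0 H.
case: (leqP n 1) => [n1 | n1].
  have -> : n = 1 by apply/eqP; rewrite eqn_leq n1 n0.
  by split => //; exists 0.
have pp := pdiv_prime n1; have pn := pdiv_dvd n.
set p := pdiv n in pp pn.
have [m cpm Hn] := pfactor_coprime pp n0.
set e := logn p n in Hn.
have e0 : 0 < e by rewrite logn_gt0 mem_primes pp n0 pn.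
have m0 : 0 < m by case: (posnP m) Hn => // ->; rewrite mul0n => E; rewrite E in n0.
have pe1 : 1 < p ^ e by rewrite -{1}(expn0 p) ltn_exp2l // prime_gt1.
have mn : m < n by rewrite Hn ltn_Pmulr.
have mdn : m %| n by rewrite Hn dvdn_mulr.
have [m4 [x0 Hx0]] := IH m mn m0 (fun q qp qm => H q qp (dvdn_trans qm mdn)).
have p4 := H p pp pn.
have [c Hc] := sqrtm1_pe e pp p4.
have cop : coprime (p ^ e) m by rewrite coprimeXl.
split.
  by rewrite Hn -modnMm m4 -modnXm p4 exp1n.
exists (chinese (p ^ e) m c x0).
rewrite Hn mulnC Gauss_dvd //; apply/andP; split.
  by rewrite (dvd_congr 2 (chinese_modl cop _ _)).
by rewrite (dvd_congr 2 (chinese_modr cop _ _)).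
Qed.

Lemma card_ne2 n x : odd n -> 1 < n -> strong_liar n (x %% n) ->
  x %% n != 1 -> x %% n != n.-1 -> #|S n| != 2.
Proof.
move=> on n1 lx x1 xm.
have n0 : 0 < n by apply: ltnW.
have n2 : 2 < n by clear -on n1; case: n on n1 => [|[|[|]]].
pose i1 : 'I_n := Ordinal n1.
have nm1 : n.-1 < n by rewrite prednK.
pose im : 'I_n := Ordinal nm1.
pose xo : 'I_n := Ordinal (ltn_pmod x n0).
have sub : xo |: [set i1; im] \subset S n.
  apply/subsetP => a; rewrite !inE => /or3P [] /eqP ->.
  - exact: lx.
  - exact: liar1.
  - exact: liarm1.
have := subset_leq_card sub; rewrite cardsU1 cards2 !inE.
have -> : xo == i1 = false by apply/negbTE; apply: contra x1 => /eqP /(congr1 val) /= ->.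
have -> : xo == im = false by apply/negbTE; apply: contra xm => /eqP /(congr1 val) /= ->.
have -> : i1 != im.
  apply/negP => /eqP /(congr1 val) /= E.
  by move: n2 E; clear; lia.
by move=> H; apply/negP => /eqP E; rewrite E in H.
Qed.

Lemma caseA_fail n : odd n -> 1 < n ->
  (forall p, prime p -> p %| n -> p %% 4 != 3) -> #|S n| != 2.
Proof.
move=> on n1 H.
have n0 : 0 < n by apply: ltnW.
have n2 : 2 < n by clear -on n1; case: n on n1 => [|[|[|]]].
have Nodd : odd (oddpart1 n) by apply: op_odd; case: n on n1 {H n0 n2} => [|[|]].
have [n4 [x Hx]] := all1mod4 n0 (fun p pp pn => p4mod on pp pn (H p pp pn)).
have k2 : 1 < two_exp n.
  rewrite /two_exp -pfactor_dvdn //; last by rewrite -subn1 subn_gt0.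
  by rewrite {1}(divn_eq n 4) n4 addn1 /= dvdn_mull.
have x2 : x ^ 2 = 1 %[mod n] -> False by move=> E; apply: (no_pm1 n2 Hx E).
apply: (@card_ne2 n x on n1).
- apply/orP; right; apply/existsP; exists (Ordinal k2); rewrite /= expn1.
  change (n %| (x %% n) ^ (2 * oddpart1 n) + 1).
  rewrite (dvd_congr _ (modn_mod x n)) expnM.
  exact: odd_pow_dvd1 Nodd Hx.
- apply/negP => /eqP E; apply: x2; rewrite -modnXm E exp1n.
  by rewrite modn_small.
- apply/negP => /eqP E; apply: x2; apply: sq1.
  by rewrite /dvdn -modnDml E addn1 prednK // modnn.
Qed.

Lemma powmod_congr d x y k : x = y %[mod d] -> x ^ k = y ^ k %[mod d].
Proof. by move=> H; rewrite -modnXm H modnXm. Qed.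

Lemma caseB_fail n p : odd n -> 1 < n -> prime p -> p %| n ->
  ~~ coprime (oddpart1 p) (oddpart1 (n %/ p)) -> #|S n| != 2.
Proof.
move=> on n1 pp pn nc.
have n0 : 0 < n by apply: ltnW.
have n2 : 2 < n by clear -on n1; case: n on n1 => [|[|[|]]].
have Nodd : odd (oddpart1 n) by apply: op_odd; case: n on n1 {pn n0 n2 nc} => [|[|]].
set m := n %/ p in nc.
have m0 : 0 < m by rewrite divn_gt0 ?prime_gt0 // dvdn_leq.
have op := prime_odd_of on pp pn.
have p3 : 2 < p by move: op (prime_gt1 pp); clear; case: p => [|[|[|]]].
have opo : odd (oddpart1 p) by apply: op_odd; rewrite -subn1 subn_gt0 ltnW.
have opd : forall r, oddpart1 r %| r.-1 by move=> r; rewrite -op_mul dvdn_mulr.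
have g1 : 1 < gcdn (oddpart1 p) (oddpart1 m).
  by rewrite ltn_neqAle eq_sym nc gcdn_gt0 odd_gt0.
have qp := pdiv_prime g1.
set q := pdiv _ in qp.
have qa : q %| oddpart1 p by apply: dvdn_trans (pdiv_dvd _) (dvdn_gcdl _ _).
have qb : q %| oddpart1 m by apply: dvdn_trans (pdiv_dvd _) (dvdn_gcdr _ _).
have oq : odd q.
  apply/negP => /negP ev; have : 2 %| oddpart1 p by apply: dvdn_trans qa; rewrite dvdn2.
  by rewrite dvdn2 opo.
have qp1 : q %| p.-1 by apply: dvdn_trans (opd p).
have qm1 : q %| m.-1 by apply: dvdn_trans (opd m).
have qn1 : q %| n.-1.
  by rewrite -(divnK pn) -/m mulnC (nm1_split (prime_gt0 pp) m0) dvdn_add // dvdn_mull.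
have qN : q %| oddpart1 n by rewrite -op_dvd_odd.
have q3 : 2 < q by move: oq (prime_gt1 qp); clear; case: q => [|[|[|]]].
set d := p.-1 %/ q.
have Hd : d * q = p.-1 by rewrite divnK.
have p10 : 0 < p.-1 by rewrite -subn1 subn_gt0 ltnW.
have d0 : 0 < d by case: (posnP d) Hd => // ->; rewrite mul0n => E; rewrite -E in p10.
have dlt : d < p.-1 by rewrite -Hd ltn_Pmulr // ltnW.
have [y [/andP [y0 yp] yd]] := roots_exist pp d0 dlt.
have nyd : ~~ (p %| y) by rewrite gtnNdvd.
set g := y ^ d in yd.
have gq : g ^ q = 1 %[mod p] by rewrite /g -expnM Hd pfermat.
have [m0' cpm Hn] := pfactor_coprime pp n0.
have e0 : 0 < logn p n by rewrite logn_gt0 mem_primes pp n0 pn.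
move: Hn; case E: (logn p n) e0 => [|j] // _ Hn.
set h := g ^ (p ^ j).
have hq : h ^ q = 1 %[mod p ^ j.+1] by rewrite /h expnAC lift1.
have hg : h = g %[mod p] by rewrite /h fermat_iter.
have cop : coprime (p ^ j.+1) m0' by rewrite coprimeXl.
set x := chinese (p ^ j.+1) m0' h 1.
have xN : x ^ oddpart1 n = 1 %[mod n].
  have nE : n = p ^ j.+1 * m0' by rewrite Hn mulnC.
  move: (oddpart1 n) qN => N qN; rewrite nE.
  apply/eqP; rewrite chinese_remainder //; apply/andP; split; apply/eqP.
    rewrite (powmod_congr _ (chinese_modl cop _ _)) -(divnK qN) mulnC expnM.
    by rewrite (powmod_congr _ hq) exp1n.
  by rewrite (powmod_congr _ (chinese_modr cop _ _)) exp1n.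
have pdn : p %| p ^ j.+1 by rewrite dvdn_exp.
apply: (@card_ne2 n x on n1).
- by apply/orP; left; apply/eqP; rewrite modnXm xN.
- apply/negP => /eqP E1; move: yd; rewrite -/g.
  have x1 : x = 1 %[mod p] by rewrite -(modn_dvdm x pn) E1.
  have xh : x = h %[mod p] by rewrite -(modn_dvdm x pdn) (chinese_modl cop h 1) (modn_dvdm h pdn).
  rewrite -hg -xh x1.
  by rewrite modn_small ?prime_gt1.
- apply/negP => /eqP E1; apply: (no_pm1 n2 _ xN); apply: odd_pow_dvd1 Nodd _.
  by rewrite /dvdn -modnDml E1 addn1 prednK // modnn.
Qed.

Theorem proposition2p4 (n : nat) :
  odd n -> 1 < n -> ~~ prime n ->
  (#|S n| = 2 <->
   ((exists p, [/\ prime p, p %| n & p %% 4 = 3]) /\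
    (forall p, prime p -> p %| n -> coprime (oddpart1 p) (oddpart1 (n %/ p))))).
Proof.
move=> on n1 _; split.
- move=> H2; split.
  + case: (boolP [exists p : 'I_n.+1, prime p && (p %| n) && (p %% 4 == 3)]).
      by case/existsP => p /andP [/andP [pp pn] /eqP p4]; exists p.
    move/existsPn => Hn; exfalso.
    suff : #|S n| != 2 by rewrite H2.
    apply: caseA_fail => // p pp pn.
    have pl : p < n.+1 by rewrite ltnS dvdn_leq // ltnW.
    by have := Hn (Ordinal pl); rewrite /= pp pn.
  + move=> p pp pn; apply/negPn/negP => nc.
    by have := caseB_fail on n1 pp pn nc; rewrite H2.
- by case => H1 H3; apply: card_S2.
Qed.
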